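(* Let $G$ be a hypo-efficient domination graph having at least one $\gamma$-critical vertex. Then \[(\delta(G)+1)(\gamma(G)-1)+1\leq |V(G)|\leq(\Delta(G)+1)(\gamma(G)-1)+1.\]
   Context: All graphs are finite, simple and undirected. For $v\in V(G)$, $N[v]$ is the closed neighborhood of $v$. A set $D\subseteq V(G)$ is dominating if every vertex of $G$ not in $D$ has a neighbor in $D$; $\gamma(G)$ is the minimum size of a dominating set. A vertex $v$ is $\gamma$-critical if $\gamma(G-v)<\gamma(G)$. A set $D\subseteq V(H)$ is an efficient dominating set (EDS) of $H$ if $|N_H[v]\cap D|=1$ for every $v\in V(H)$. $G$ is a hypo-efficient domination graph if $G$ has no EDS but $G-v$ has at least one EDS for every $v\in V(G)$. $\delta(G)$, $\Delta(G)$ are the minimum and maximum degree. *)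

(* Defs.v *)
From mathcomp Require Import all_boot all_order.
Set Implicit Arguments. Unset Strict Implicit. Unset Printing Implicit Defensive.

Section Graphs.
Variable T : finType.
Variable e : rel T.

Definition simple_graph := symmetric e /\ irreflexive e.

(* closed neighbourhood of v in the induced subgraph G[S] *)
Definition cnbhd (S : {set T}) (v : T) : {set T} :=
  [set u in S | (u == v) || e v u].

Definition deg (v : T) : nat := #|[set u | e v u]|.
Definition mindeg : nat := \big[minn/#|T|]_(v : T) deg v.
Definition maxdeg : nat := \max_(v : T) deg v.

Definition dominating (S D : {set T}) : bool :=
  (D \subset S) && [forall x in S, (x \in D) || [exists y in D, e x y]].

(* domination number of G[S] (S itself is dominating, so this is the minimum) *)
Definition gamma (S : {set T}) : nat :=
  \big[minn/#|S|]_(D : {set T} | dominating S D) #|D|.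

Definition eds (S D : {set T}) : bool :=
  (D \subset S) && [forall v in S, #|cnbhd S v :&: D| == 1].

Definition has_eds (S : {set T}) : bool := [exists D, eds S D].

Definition hypo_efficient : Prop :=
  ~~ has_eds setT /\ forall v : T, has_eds (setT :\ v).

Definition gamma_critical (v : T) : bool := gamma (setT :\ v) < gamma setT.

End Graphs.

(* Main.v *)
Require Import Defs.
From mathcomp Require Import all_boot all_order.
From mathcomp Require Import zify.
Set Implicit Arguments. Unset Strict Implicit. Unset Printing Implicit Defensive.

Lemma bigmin_le (I : eqType) (r : seq I) (P : pred I) (F : I -> nat) x j :
  j \in r -> P j -> \big[minn/x]_(i <- r | P i) F i <= F j.
Proof.
elim: r => [//|a r IH]; rewrite inE big_cons => /orP [/eqP <- -> | jr Pj].
  exact: geq_minl.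
case: (P a); last exact: IH.
by apply: leq_trans (geq_minr _ _) (IH jr Pj).
Qed.

Section H.
Variable T : finType.
Variable e : rel T.

Lemma gamma_le (S D : {set T}) : dominating e S D -> gamma e S <= #|D|.
Proof. by move=> hD; apply: bigmin_le; rewrite ?mem_index_enum. Qed.

Lemma gamma_ge (S : {set T}) k : k <= #|S| -> (forall D, dominating e S D -> k <= #|D|) -> k <= gamma e S.
Proof.
move=> hS hD; rewrite /gamma; apply: (big_ind (fun x => k <= x)) => //.
by move=> x y; rewrite leq_min => -> ->.
Qed.

Lemma card_sum_in (C B : {set T}) : #|C :&: B| = \sum_(x in B) (x \in C : nat).
Proof.
rewrite -sum1_card big_mkcond /= [RHS]big_mkcond /=.
by apply: eq_bigr => x _; rewrite !inE andbC; case: (x \in B); case: (x \in C).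
Qed.

Lemma dc (S A B : {set T}) : symmetric e -> A \subset S -> B \subset S ->
  \sum_(y in A) #|cnbhd e S y :&: B| = \sum_(x in B) #|cnbhd e S x :&: A|.
Proof.
move=> sy /subsetP hA /subsetP hB.
under eq_bigr => y _ do rewrite card_sum_in.
under [RHS]eq_bigr => x _ do rewrite card_sum_in.
rewrite exchange_big /=; apply: eq_bigr => x xB; apply: eq_bigr => y yA.
rewrite !inE (hA _ yA) (hB _ xB) /= eq_sym sy //.
Qed.

Lemma mindeg_le d : mindeg e <= deg e d.
Proof. by apply: bigmin_le; rewrite ?mem_index_enum. Qed.

Lemma maxdeg_ge d : deg e d <= maxdeg e.
Proof. exact: leq_bigmax. Qed.
End H.

Theorem theorem3p16 (T : finType) (e : rel T) :
  simple_graph e -> hypo_efficient e ->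
  (exists v : T, gamma_critical e v) ->
  (mindeg e + 1) * (gamma e setT - 1) + 1 <= #|T| /\
  #|T| <= (maxdeg e + 1) * (gamma e setT - 1) + 1.
Proof.
move=> [sy irr] [_ hv] [v crit].
set S := setT :\ v.
have /existsP [D /andP [/subsetP DS /forallP Dall]] := hv v.
have Ddom : dominating e S D.
  apply/andP; split; first by apply/subsetP.
  apply/forallP => x; apply/implyP => xS.
  have := implyP (Dall x) xS => /eqP h.
  have /card_gt0P [y] : 0 < #|cnbhd e S x :&: D| by rewrite h.
  rewrite !inE => /andP [/andP [_ /orP [/eqP -> | exy]] yD]; first by rewrite yD.
  by apply/orP; right; apply/existsP; exists y; rewrite yD.
have Dmin : forall D', dominating e S D' -> #|D| <= #|D'|.
  move=> D' /andP [/subsetP D'S /forallP D'dom].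
  have e1 := @dc T e S D' D sy (introT subsetP D'S) (introT subsetP DS).
  have -> : #|D'| = \sum_(y in D') #|cnbhd e S y :&: D|.
    rewrite -sum1_card; apply: eq_bigr => y yD.
    by have := implyP (Dall y) (D'S _ yD) => /eqP ->.
  rewrite e1 -sum1_card; apply: leq_sum => d dD.
  have := implyP (D'dom d) (DS _ dD) => /orP [dD'|/existsP [y /andP [yD' edy]]];
    apply/card_gt0P.
    by exists d; rewrite in_setI dD' andbT /cnbhd in_set (DS _ dD) eqxx.
  by exists y; rewrite in_setI yD' andbT /cnbhd in_set (D'S _ yD') edy orbT.
have gS : gamma e S = #|D|.
  apply/eqP; rewrite eqn_leq gamma_le //=.
  by apply: gamma_ge => //; apply: subset_leq_card; apply/subsetP.
have gT : gamma e setT = #|D|.+1.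
  apply/eqP; rewrite eqn_leq; move: crit; rewrite /gamma_critical -/S gS => ->.
  rewrite andbT; apply: leq_trans (gamma_le (D := v |: D) _) _.
    apply/andP; split; first exact: subsetT.
    apply/forallP => x; apply/implyP => _.
    case: (eqVneq x v) => [->|xv]; first by rewrite setU11.
    have /andP [_ /forallP H] := Ddom.
    have := implyP (H x); rewrite !inE xv /= => /(_ isT) /orP [->|/existsP [y /andP [yD exy]]].
      by rewrite orbT.
    by apply/orP; right; apply/existsP; exists y; rewrite !inE yD orbT.
  by rewrite cardsU1; case: (v \notin D).
have noadj : forall d, d \in D -> ~~ e d v.
  move=> d dD; apply/negP => edv.
  have : gamma e setT <= #|D|.
    apply: gamma_le; apply/andP; split; first exact: subsetT.
    apply/forallP => x; apply/implyP => _.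
    case: (eqVneq x v) => [->|xv].
      by apply/orP; right; apply/existsP; exists d; rewrite dD sy.
    have /andP [_ /forallP H] := Ddom.
    by apply: (implyP (H x)); rewrite !inE xv.
  by rewrite gT ltnn.
have cardS : #|S| = \sum_(d in D) (deg e d).+1.
  have := @dc T e S S D sy (subxx _) (introT subsetP DS).
  have -> : \sum_(y in S) #|cnbhd e S y :&: D| = #|S|.
    rewrite -sum1_card; apply: eq_bigr => y yS.
    by have := implyP (Dall y) yS => /eqP ->.
  move=> ->; apply: eq_bigr => d dD.
  have -> : cnbhd e S d :&: S = d |: [set u | e d u].
    apply/setP => u; rewrite !inE.
    case: (eqVneq u d) => [->|ud] /=.
      by have := DS _ dD; rewrite !inE => ->.
    case edu: (e d u); last by rewrite !andbF.
    case: (eqVneq u v) => [uv|] //=.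
    by move: (noadj _ dD); rewrite -uv edu.
  by rewrite cardsU1 inE irr add1n.
have cT : #|T| = (#|S|).+1 by rewrite -cardsT (cardsD1 v) inE.
have L : (mindeg e + 1) * #|D| <= \sum_(d in D) (deg e d).+1.
  rewrite mulnC -sum_nat_const; apply: leq_sum => d _.
  by rewrite addn1 ltnS mindeg_le.
have U : \sum_(d in D) (deg e d).+1 <= (maxdeg e + 1) * #|D|.
  rewrite mulnC -sum_nat_const; apply: leq_sum => d _.
  by rewrite addn1 ltnS maxdeg_ge.
rewrite gT subn1 /= cT cardS; lia.
Qed.
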